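(* Fix a constant $c>0$. There is a constant $C$ (depending only on $c$) such that for every $n=2^k$ and every $c$-Ramsey graph $G$ with $n$ vertices, the formula $\Psi_G$ has a treelike resolution refutation with at most $n^{C\log n}$ clauses; i.e. of size $n^{O(\log n)}$.
   Context: Logarithms are base 2. A graph $G$ on $n$ vertices is $c$-Ramsey if no set of $c\log n$ vertices is a clique or an independent set. A resolution refutation of a CNF is a sequence of clauses, each a clause of the formula or derived from earlier clauses $A\lor x$, $B\lor\neg x$ as $A\lor B$, ending in the empty clause; it is treelike if each derived clause is used as a premise at most once. For a graph $G$ on $n=2^k$ vertices, identify vertices with strings $v=v_1\cdots v_k\in\{0,1\}^k$ (assume $ck$ is an integer). $\Psi_G$ has variables $x^i_b$ ($i\in[ck]$, $b\in[k]$) and $y$; $(x^i_b\ne v_b)$ denotes $\neg x^i_b$ if $v_b=1$ and $x^i_b$ if $v_b=0$. Clauses: (1) for each vertex $v$ and distinct $i,j$: $\bigvee_b(x^i_b\ne v_b)\lor\bigvee_b(x^j_b\ne v_b)$; (2) for distinct $u,v$ with $\{u,v\}\in E(G)$ and distinct $i,j$: $y\lor\bigvee_b(x^i_b\ne u_b)\lor\bigvee_b(x^j_b\ne v_b)$; (3) for distinct $u,v$ with $\{u,v\}\notin E(G)$ and distinct $i,j$: $\neg y\lor\bigvee_b(x^i_b\ne u_b)\lor\bigvee_b(x^j_b\ne v_b)$. *)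

(* Defs.v *)
From HB Require Import structures.
From mathcomp Require Import all_boot all_order all_algebra.
From mathcomp Require Export reals.
Set Implicit Arguments. Unset Strict Implicit. Unset Printing Implicit Defensive.

(* Vertices of a graph on n = 2^k vertices are bit strings
   v = v_1 ... v_k, i.e. functions 'I_k -> bool.  m plays the role of c*k = c log n. *)
Definition vert (k : nat) := {ffun 'I_k -> bool}.

(* Variables of Psi_G: x^i_b (i < m, b < k) encoded as inl (i,b), and y as inr tt. *)
Definition var (m k : nat) := (('I_m * 'I_k) + unit)%type.
(* A literal is a variable with a polarity (true = positive, false = negated). *)
Definition lit (m k : nat) := (var m k * bool)%type.
Definition clause (m k : nat) := {set lit m k}.

(* The literal (x^i_b != v_b): negated x^i_b if v_b = 1, positive x^i_b if v_b = 0. *)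
Definition neqlit m k (i : 'I_m) (b : 'I_k) (v : vert k) : lit m k :=
  (inl (i, b), ~~ v b).
Definition vclause m k (i : 'I_m) (v : vert k) : clause m k :=
  [set neqlit i b v | b : 'I_k].
Definition ylit m k (pol : bool) : lit m k := (inr tt, pol).

Definition Psi m k (G : rel (vert k)) (C : clause m k) : Prop :=
  (exists (v : vert k) (i j : 'I_m), i != j /\ C = vclause i v :|: vclause j v)
  \/ (exists (u v : vert k) (i j : 'I_m), u != v /\ G u v /\ i != j /\
        C = [set ylit m k true] :|: vclause i u :|: vclause j v)
  \/ (exists (u v : vert k) (i j : 'I_m), u != v /\ ~~ G u v /\ i != j /\
        C = [set ylit m k false] :|: vclause i u :|: vclause j v).

Definition is_clique k (G : rel (vert k)) (S : {set vert k}) : Prop :=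
  forall u v, u \in S -> v \in S -> u != v -> G u v.
Definition is_indep k (G : rel (vert k)) (S : {set vert k}) : Prop :=
  forall u v, u \in S -> v \in S -> u != v -> ~~ G u v.
Definition ramsey_m k (G : rel (vert k)) (m : nat) : Prop :=
  forall S : {set vert k}, #|S| = m -> ~ is_clique G S /\ ~ is_indep G S.

Definition resolvent m k (C1 C2 D : clause m k) : Prop :=
  exists (x : var m k) (A B : clause m k),
    C1 = A :|: [set (x, true)] /\ C2 = B :|: [set (x, false)] /\ D = A :|: B.

Inductive just := Ax | Res of nat & nat.
Definition line m k := (clause m k * just)%type.
Definition rproof m k := seq (line m k).
Definition dline m k : line m k := (set0, Ax).

Definition valid_line m k (F : clause m k -> Prop) (P : rproof m k) (p : nat) : Prop :=
  let l := nth (dline m k) P p in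
  match l.2 with
  | Ax => F l.1
  | Res i j => (i < p)%N /\ (j < p)%N /\
      (resolvent (nth (dline m k) P i).1 (nth (dline m k) P j).1 l.1 \/
       resolvent (nth (dline m k) P j).1 (nth (dline m k) P i).1 l.1)
  end.

Definition is_refutation m k (F : clause m k -> Prop) (P : rproof m k) : Prop :=
  P <> [::] /\ (forall p, (p < size P)%N -> valid_line F P p) /\
  (nth (dline m k) P (size P).-1).1 = set0.

Definition premises m k (l : line m k) : seq nat :=
  match l.2 with Ax => [::] | Res i j => [:: i; j] end.
Definition is_derived m k (l : line m k) : bool :=
  match l.2 with Ax => false | Res _ _ => true end.

Definition treelike m k (P : rproof m k) : Prop :=
  forall q, (q < size P)%N -> is_derived (nth (dline m k) P q) ->
    (count (pred1 q) (flatten (map (@premises m k) P)) <= 1)%N.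

(* Main.v *)
Require Import Defs.
From HB Require Import structures.
From mathcomp Require Import all_boot all_order all_algebra.
From mathcomp Require Import reals.
From mathcomp Require Import zify.
From Stdlib Require Import Classical.
Import Order.TTheory GRing.Theory Num.Theory.
Set Implicit Arguments. Unset Strict Implicit. Unset Printing Implicit Defensive.

Section Trees.
Variables m k : nat.
Variable F : clause m k -> Prop.

Inductive tree := Leaf of clause m k | Node of clause m k & tree & tree.

Definition root t := match t with Leaf C => C | Node C _ _ => C end.
Fixpoint tsize t := match t with Leaf _ => 1 | Node _ t1 t2 => tsize t1 + tsize t2 + 1 end.
Fixpoint wf t := match t with Leaf C => F C
  | Node C t1 t2 => wf t1 /\ wf t2 /\ resolvent (root t1) (root t2) C end.
Fixpoint lin t o : rproof m k := match t with
 | Leaf C => [:: (C, Ax)]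
 | Node C t1 t2 => lin t1 o ++ lin t2 (o + tsize t1) ++
     [:: (C, Res (o + tsize t1).-1 (o + tsize t1 + tsize t2).-1)]
end.

Lemma tsize_gt0 t : 0 < tsize t.
Proof. case: t => //= *; lia. Qed.

Lemma size_lin t o : size (lin t o) = tsize t.
Proof. elim: t o => //= C t1 IH1 t2 IH2 o; rewrite !size_cat IH1 IH2 /=; lia. Qed.

Lemma nth_lin1 C t1 t2 o q : q < tsize t1 ->
  nth (dline m k) (lin (Node C t1 t2) o) q = nth (dline m k) (lin t1 o) q.
Proof. by move=> h; rewrite /= nth_cat size_lin h. Qed.

Lemma nth_lin2 C t1 t2 o q :
  nth (dline m k) (lin (Node C t1 t2) o) (tsize t1 + q) =
  nth (dline m k) (lin t2 (o + tsize t1) ++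
     [:: (C, Res (o + tsize t1).-1 (o + tsize t1 + tsize t2).-1)]) q.
Proof. by rewrite /= nth_cat size_lin ltnNge leq_addr /= addKn. Qed.

Lemma last_lin t o : (nth (dline m k) (lin t o) (tsize t).-1).1 = root t.
Proof.
case: t => //= C t1 t2.
have -> : (tsize t1 + tsize t2 + 1).-1 = tsize t1 + tsize t2 by lia.
by rewrite nth_cat size_lin ltnNge leq_addr /= addKn nth_cat size_lin ltnn subnn.
Qed.

Lemma valid_lin t o P : wf t ->
  (forall p, p < tsize t -> nth (dline m k) P (o + p) = nth (dline m k) (lin t o) p) ->
  forall p, p < tsize t -> valid_line F P (o + p).
Proof.
elim: t o => [C|C t1 IH1 t2 IH2] o /= Hwf HP p Hp.
- have p0 : p = 0 by lia.
  by subst p; rewrite /valid_line HP.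
- case: Hwf => [w1 [w2 Hr]].
  have g1 := tsize_gt0 t1; have g2 := tsize_gt0 t2.
  case: (ltnP p (tsize t1)) => H1.
  + apply: IH1 => // q Hq. rewrite HP; last lia.
    by rewrite nth_cat size_lin Hq.
  case: (ltnP p (tsize t1 + tsize t2)) => H2.
  + have -> : o + p = (o + tsize t1) + (p - tsize t1) by lia.
    apply: IH2 => //; last lia. move=> q Hq.
    rewrite -addnA HP; last lia.
    by rewrite -/(lin (Node C t1 t2) o) nth_lin2 nth_cat size_lin Hq.
  + have Ep : p = tsize t1 + tsize t2 by lia. subst p.
    rewrite /valid_line HP // -/(lin (Node C t1 t2) o) nth_lin2 nth_cat size_lin ltnn subnn /=.
    split; first lia. split; first lia. left.
    have -> : (o + tsize t1).-1 = o + (tsize t1).-1 by lia.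
    have -> : (o + tsize t1 + tsize t2).-1 = o + (tsize t1 + (tsize t2).-1) by lia.
    rewrite !HP; try lia.
    have h1 : (tsize t1).-1 < tsize t1 by lia.
    have h2 : (tsize t2).-1 < tsize t2 by lia.
    rewrite -/(lin (Node C t1 t2) o) nth_lin1 // last_lin nth_lin2 nth_cat size_lin h2 last_lin.
    exact Hr.
Qed.

Definition prem (P : rproof m k) := flatten (map (@premises m k) P).

Lemma prem_lin t o q : count (pred1 q) (prem (lin t o)) <= 1 /\
   (0 < count (pred1 q) (prem (lin t o)) -> o <= q /\ q < o + tsize t - 1).
Proof.
elim: t o => [C|C t1 IH1 t2 IH2] o /=; first by rewrite /prem /= /premises /=.
rewrite /prem !map_cat !flatten_cat !count_cat -!/(prem _).
have [a1 b1] := IH1 o; have [a2 b2] := IH2 (o + tsize t1).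
have g1 := tsize_gt0 t1; have g2 := tsize_gt0 t2.
rewrite /= /premises /=.
move: a1 b1 a2 b2.
set x := count _ (prem (lin t1 o)); set y := count _ (prem (lin t2 _)).
case: eqP => e1; case: eqP => e2 /= a1 b1 a2 b2.
all: case: x a1 b1 => [|[|x]] a1 b1; try lia.
all: case: y a2 b2 => [|[|y]] a2 b2; try lia.
all: try (have := b1 isT); try (have := b2 isT); lia.
Qed.


Definition fals (a : var m k -> bool) (U : seq (var m k)) (D : clause m k) :=
  forall l, l \in D -> l.1 \notin U /\ a l.1 = ~~ l.2.

Definition upd (a : var m k -> bool) x b := fun y => if y == x then b else a y.

Lemma fals_upd a x b vs D : fals (upd a x b) vs D ->
  forall l, l \in D -> l != (x, ~~ b) -> l.1 \notin x :: vs /\ a l.1 = ~~ l.2.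
Proof.
move=> H [y p] /H [] /= Hy Ha; rewrite /upd in Ha.
case: eqP Ha => [-> Ha|Hyx Ha] Hne.
- by rewrite Ha negbK eqxx in Hne.
- by rewrite in_cons negb_or Hy andbT; split=> //; apply/eqP.
Qed.

Lemma dt : (forall a, exists C, F C /\ forall l, l \in C -> a l.1 = ~~ l.2) ->
  forall vs a, exists t, wf t /\ fals a vs (root t) /\ tsize t < 2 ^ (size vs + 1).
Proof.
move=> Hun; elim=> [|x vs IH] a.
- have [C [FC HC]] := Hun a.
  by exists (Leaf C); split=> //; split=> // l /HC.
have [t1 [w1 [f1 s1]]] := IH (upd a x true).
have [t0 [w0 [f0 s0]]] := IH (upd a x false).
have e : 2 ^ (size (x :: vs) + 1) = 2 * 2 ^ (size vs + 1) by rewrite /= addSn expnS.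
rewrite e.
case: (boolP ((x, false) \in root t1)) => h1; last first.
  exists t1; split=> //; split; last lia.
  move=> l lD; apply: (fals_upd f1) => //=.
  by apply: contraNneq h1 => <-.
case: (boolP ((x, true) \in root t0)) => h0; last first.
  exists t0; split=> //; split; last lia.
  move=> l lD; apply: (fals_upd f0) => //=.
  by apply: contraNneq h0 => <-.
exists (Node (root t0 :\ (x, true) :|: root t1 :\ (x, false)) t0 t1).
split.
  split=> //; split=> //.
  exists x, (root t0 :\ (x, true)), (root t1 :\ (x, false)).
  by rewrite !(setUC _ [set _]) !setD1K.
split; last by rewrite /=; lia.
move=> l; rewrite inE => /orP [] /setD1P [ne lD].
- by apply: (fals_upd f0).
- by apply: (fals_upd f1).
Qed.

End Trees.

Lemma fals_v m k (a : var m k -> bool) (i : 'I_m) v :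
  [ffun b => a (inl (i, b))] = v -> forall l, l \in vclause i v -> a l.1 = ~~ l.2.
Proof.
move=> <- l /imsetP [b _ ->] /=; by rewrite ffunE negbK.
Qed.

Lemma unsat m k (G : rel (vert k)) : ramsey_m G m ->
  forall a : var m k -> bool, exists C, Psi G C /\ forall l, l \in C -> a l.1 = ~~ l.2.
Proof.
move=> Hr a; apply: NNPP => H.
pose xv (i : 'I_m) : vert k := [ffun b => a (inl (i, b))].
have inj : injective xv.
  move=> i j e; apply/eqP; apply/negPn/negP => neq; apply: H.
  exists (vclause i (xv i) :|: vclause j (xv i)); split.
    by left; exists (xv i), i, j.
  move=> l; rewrite inE => /orP [] hl.
  - exact: (fals_v (erefl _) hl).
  - exact: (fals_v (esym e) hl).
have [ncl nind] := Hr (xv @: setT) (etrans (card_imset _ inj) (etrans (cardsT _) (card_ord m))).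
have fl : forall pol i j, a (inr tt) = ~~ pol -> forall l,
   l \in [set ylit m k pol] :|: vclause i (xv i) :|: vclause j (xv j) -> a l.1 = ~~ l.2.
  move=> pol i j ay l; rewrite !in_setU in_set1 => /orP [/orP [/eqP -> | hl] | hl].
  - exact: ay.
  - exact: (fals_v (erefl _) hl).
  - exact: (fals_v (erefl _) hl).
case ay: (a (inr tt)).
- apply: ncl => u v /imsetP [i _ ->] /imsetP [j _ ->] neq.
  case Guv: (G (xv i) (xv j)) => //; exfalso; apply: H.
  exists ([set ylit m k false] :|: vclause i (xv i) :|: vclause j (xv j)); split.
    right; right; exists (xv i), (xv j), i, j; split=> //; split; first by rewrite Guv.
    by split=> //; apply: contraNneq neq => ->.
  by apply: fl; rewrite ay.
- apply: nind => u v /imsetP [i _ ->] /imsetP [j _ ->] neq.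
  case Guv: (G (xv i) (xv j)) => //; exfalso; apply: H.
  exists ([set ylit m k true] :|: vclause i (xv i) :|: vclause j (xv j)); split.
    right; left; exists (xv i), (xv j), i, j; split=> //; split; first by rewrite Guv.
    by split=> //; apply: contraNneq neq => ->.
  by apply: fl; rewrite ay.
Qed.

Theorem mainTheorem2 (R : realType) (c : R) (hc : (0 < c)%R) :
  exists C : nat,
    forall (k m : nat) (G : rel (vert k)),
      (c * k%:R = m%:R)%R ->
      irreflexive G -> symmetric G ->
      ramsey_m G m ->
      exists P : rproof m k,
        is_refutation (Psi G) P /\ treelike P /\
        (size P <= (2 ^ k) ^ (C * k))%N.
Proof.
have [C0 hC0] : exists C0 : nat, (c < C0%:R)%R.
  by exists (Num.bound c); apply: archi_boundP; apply: ltW.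
exists (C0 + 2) => k m G hm _ _ Hr.
have mle : m <= C0 * k.
  rewrite -(ler_nat R) natrM -hm; apply: ler_wpM2r; [by rewrite ler0n | exact: ltW].
have kpos : 0 < k.
  case: k G hm Hr mle => // G hm Hr mle.
  have m0 : m = 0 by lia.
  subst m; have [ncl _] := Hr set0 (cards0 _).
  by exfalso; apply: ncl => u v; rewrite in_set0.
have [t [w [f s]]] := dt (unsat Hr) (enum [set: var m k]) (fun _ => false).
have r0 : root t = set0.
  apply/setP => l; rewrite in_set0; apply/negP => /f [] /negP; by rewrite mem_enum in_setT.
have sz : size (enum [set: var m k]) = m * k + 1.
  by rewrite -cardE cardsT card_sum card_prod !card_ord card_unit.
exists (lin t 0); split; [split; [|split] | split].
- by move=> e; have := size_lin t 0; rewrite e /=; have := tsize_gt0 t; lia.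
- move=> p; rewrite size_lin => hp.
  rewrite -(add0n p); apply: (valid_lin w) => // q _; by rewrite add0n.
- by rewrite size_lin last_lin.
- by move=> q _ _; exact: (prem_lin t 0 q).1.
- rewrite size_lin; apply: leq_trans (ltnW s) _.
  rewrite sz -expnM leq_exp2l //; nia.
Qed.
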